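(* Let $\epsilon>0$ and $n\ge1$. Consider mechanisms $Q:\mathbb{R}^n\to\Delta(\mathbb{R}^n)$ of the form $Qu=u+V$, where the noise $V$ has distribution $g\in\Delta(\mathbb{R}^n)$ independent of the input $u$, and suppose $Q$ is $\epsilon$-Lipschitz private with respect to the $\ell_1$-norm on $\mathbb{R}^n$. Then $$\mathbb{E}_{V\sim g}\|V\|_2^2\;\ge\;\mathbb{E}_{V\sim l_1^n}\|V\|_2^2=\frac{2n}{\epsilon^2},$$ where $l_1^n(v)=\left(\frac{\epsilon}{2}\right)^n e^{-\epsilon\|v\|_1}$; i.e. the Laplace mechanism adding noise with density $l_1^n$ minimizes the mean-squared error for the identity query $q(u)=u$ among all such mechanisms.
   Context: $\Delta(\mathcal{Y})$ denotes the set of Borel probability measures on $\mathcal{Y}$. For a normed space $(\mathcal{U},\|\cdot\|)$, a mechanism $Q:\mathcal{U}\to\Delta(\mathcal{Y})$ is $\epsilon$-Lipschitz private if for all $u,u'\in\mathcal{U}$ and all measurable $\mathcal{S}\subseteq\mathcal{Y}$, $|\ln\mathbb{P}(Qu\in\mathcal{S})-\ln\mathbb{P}(Qu'\in\mathcal{S})|\le\epsilon\|u-u'\|$, equivalently $\mathbb{P}(Qu\in\mathcal{S})\le e^{\epsilon\|u-u'\|}\mathbb{P}(Qu'\in\mathcal{S})$. *)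

(* Defs.v *)
(* R^n is modelled as n.-tuple R,
   which MathComp-Analysis equips with the product sigma-algebra of the
   Borel sigma-algebras (generated by the coordinate projections tnth),
   i.e. the Borel sigma-algebra of R^n. *)
From HB Require Import structures.
From mathcomp Require Import all_boot all_order all_algebra.
From mathcomp Require Import all_classical all_reals all_analysis.
Set Implicit Arguments. Unset Strict Implicit. Unset Printing Implicit Defensive.
Import Order.TTheory GRing.Theory Num.Theory.
Local Open Scope classical_set_scope.
Local Open Scope ring_scope.

Section Rn.
Variable R : realType.

Definition tadd n (u v : n.-tuple R) : n.-tuple R :=
  [tuple tnth u i + tnth v i | i < n].
Definition tsub n (u v : n.-tuple R) : n.-tuple R :=
  [tuple tnth u i - tnth v i | i < n].

Definition l1norm n (v : n.-tuple R) : R := \sum_(i < n) `|tnth v i|.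
Definition l2sq n (v : n.-tuple R) : R := \sum_(i < n) (tnth v i) ^+ 2.

(* The additive-noise mechanism Q u = u + V, V ~ g, is eps-Lipschitz private
   w.r.t. the l1 norm:  P(Qu in S) <= exp(eps ||u-u'||_1) P(Qu' in S).
   Here P(Qu in S) = g {v | u + v in S}. *)
Definition additive_lipschitz_private n (eps : R)
    (g : probability (n.-tuple R) R) : Prop :=
  forall (u u' : n.-tuple R) (S : set (n.-tuple R)), measurable S ->
    (g (tadd u @^-1` S) <=
       (expR (eps * l1norm (tsub u u')))%:E * g (tadd u' @^-1` S))%E.

(* n-fold iterated Lebesgue integral over R^n (for nonnegative integrands
   this is the Lebesgue integral on R^n, by Tonelli) *)
Fixpoint lebesgue_int_n (n : nat) : (n.-tuple R -> \bar R) -> \bar R :=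
  match n with
  | 0 => fun f => f [tuple]
  | k.+1 => fun f =>
      (\int[@lebesgue_measure R]_x lebesgue_int_n (fun t => f (cons_tuple x t)))%E
  end.

Definition laplace_density n (eps : R) (v : n.-tuple R) : R :=
  (eps / 2) ^+ n * expR (- (eps * l1norm v)).

End Rn.

(* Main.v *)
Require Import Defs.
From HB Require Import structures.
From mathcomp Require Import all_boot all_order all_algebra.
From mathcomp Require Import all_classical all_reals all_analysis.
From mathcomp Require Import ring.
From mathcomp Require Import measurable_realfun.
Import Order.TTheory GRing.Theory Num.Theory.
Import numFieldNormedType.Exports.
Local Open Scope classical_set_scope.
Local Open Scope ring_scope.
Section A.
Context {R : realType}.

Lemma powexp_bound (k : nat) (y : R) : 0 < y ->
  y ^+ k * expR (- y) <= (k.+1)`!%:R / y.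
Proof.
move=> y0.
have h := expR_ge1Dxn k (ltW y0).
have e0 := expR_gt0 y.
have C0 : 0 < (k.+1)`!%:R :> R by rewrite ltr0n fact_gt0.
rewrite expRN ler_pdivlMr // mulrAC ler_pdivrMr // -exprSr.
apply: le_trans (ler_wpM2l (ltW C0) h).
rewrite mulrDr mulr1 mulrCA divff ?gt_eqF // mulr1 lerDr ltW //.
Qed.
End A.
Section A2.
Context {R : realType}.
Lemma powexp_cvg (k : nat) (a : R) : 0 < a ->
  (fun x : R => x ^+ k * expR (- (a * x))) x @[x --> +oo] --> 0.
Proof.
move=> a0.
have Hinv : (fun x : R => (a * x)^-1) x @[x --> +oo] --> 0.
  apply/gtr0_cvgV0.
    near=> x.
    have x0 : 0 < x by near: x; apply: nbhs_pinfty_gt; rewrite num_real.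
    exact: mulr_gt0.
  by apply: (@gt0_cvgMry R _ _ a id a0); exact: cvg_id.
apply: (@squeeze_cvgr _ _ _ _ (fun=> 0) (fun x => a ^- k * ((k.+1)`!%:R * (a * x)^-1))).
- near=> x.
  have x0 : 0 < x by near: x; apply: nbhs_pinfty_gt; rewrite num_real.
  have -> : 0 <= x ^+ k * expR (- (a * x)) by rewrite mulr_ge0 ?exprn_ge0 ?expR_ge0 // ltW.
  rewrite /=.
  have := @powexp_bound R k (a * x) (mulr_gt0 a0 x0).
  rewrite exprMn => hb.
  have ak0 : a ^+ k != 0 by rewrite expf_neq0 // gt_eqF.
  rewrite -(mulKf ak0 (x ^+ k * expR (- (a * x)))) (mulrA (a ^+ k)).
  by rewrite ler_wpM2l // invr_ge0 exprn_ge0 // ltW.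
- exact: cvg_cst.
- rewrite -[X in _ --> X](mulr0 (a ^- k)); apply: cvgMl_tmp.
  rewrite -[X in _ --> X](mulr0 ((k.+1)`!%:R)); apply: cvgMl_tmp.
  exact: Hinv.
Unshelve. all: by end_near. Qed.
End A2.
Section B.
Context {R : realType}.
Local Notation mu := (@lebesgue_measure R).

Lemma deriv_cont (F : R -> R) (dF : R -> R) :
  (forall x : R, is_derive x (1 : R) F (dF x)) -> continuous F.
Proof.
move=> h x; apply: differentiable_continuous; apply/derivable1_diffP.
by have [] := h x.
Qed.

Lemma lap_int (eps A B : R) : 0 < eps -> 0 <= A -> 0 <= B ->
  (\int[mu]_x (((A + B * x ^+ 2) * (eps / 2 * expR (- (eps * `|x|)))))%:E
   = (A + B * (2 / eps ^+ 2))%:E)%E.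
Proof.
move=> e0 A0 B0.
have en0 : eps != 0 by rewrite gt_eqF.
pose g := fun x : R => (A + B * x ^+ 2) * (eps / 2 * expR (- (eps * x))).
have gd (x : R) : is_derive x 1 g ((2 * B * x) * (eps / 2 * expR (- (eps * x)))
     + (A + B * x ^+ 2) * (eps / 2 * (- eps * expR (- (eps * x))))).
  by apply: is_derive_eq; rewrite /GRing.scale /= !mulr1; ring.
have gc : continuous g := @deriv_cont g _ gd.
have f0 (x : R) : 0 <= (A + B * x ^+ 2) * (eps / 2 * expR (- (eps * `|x|))).
  apply: mulr_ge0; first by apply: addr_ge0 => //; apply: mulr_ge0 => //; exact: sqr_ge0.
  by apply: mulr_ge0; [apply: divr_ge0; [exact: ltW|] | exact: expR_ge0].
have fc : continuous (fun x : R => (A + B * x ^+ 2) * (eps / 2 * expR (- (eps * `|x|)))).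
  have -> : (fun x => (A + B * x ^+ 2) * (eps / 2 * expR (- (eps * `|x|)))) = g \o (fun x : R => `|x|).
    by apply/funext => x /=; rewrite /g real_normK ?num_real.
  move=> x; apply: continuous_comp; [exact: norm_continuous | exact: gc].
rewrite ge0_symfun_integralT //; last first.
  by move=> x /=; rewrite normrN sqrrN.
pose F := fun x : R => - (expR (- (eps * x)) * (A + B * (x ^+ 2 + 2 * x / eps + 2 / eps ^+ 2))) / 2.
have Fd (x : R) : is_derive x 1 F (g x).
  by apply: is_derive_eq; rewrite /GRing.scale /= !mulr1 /g; field.
have Fc : continuous F := @deriv_cont F _ Fd.
have Flim : F x @[x --> +oo] --> 0.
  have -> : F = fun x => (- (A + 2 * B / eps ^+ 2) / 2) * (x ^+ 0 * expR (- (eps * x)))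
      + (- B / eps) * (x ^+ 1 * expR (- (eps * x)))
      + (- B / 2) * (x ^+ 2 * expR (- (eps * x))).
    by apply/funext => x; rewrite /F expr0 expr1; field.
  rewrite -[X in _ --> X](addr0 0) -[X in _ --> X + _](addr0 0).
  apply: cvgD; first apply: cvgD.
  - rewrite -[X in _ --> X](mulr0 (- (A + 2 * B / eps ^+ 2) / 2)); apply: cvgMl_tmp; exact: powexp_cvg.
  - rewrite -[X in _ --> X](mulr0 (- B / eps)); apply: cvgMl_tmp; exact: powexp_cvg.
  - rewrite -[X in _ --> X](mulr0 (- B / 2)); apply: cvgMl_tmp; exact: powexp_cvg.
rewrite -set_itvcy (@ge0_continuous_FTC2y _ _ F 0 0).
- rewrite -EFinB -EFinM; congr EFin.
  rewrite /F /= expr0n /= !mulr0 oppr0 expR0 mul1r add0r.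
  by field.
- by move=> x _; exact: f0.
- exact: continuous_subspaceT.
- exact: Flim.
- by move=> x _; have [] := Fd x.
- exact: cvg_at_right_filter (Fc 0).
- move=> x; rewrite in_itv /= andbT => x0.
  have := Fd x; move=> Fdx; rewrite derive1E derive_val /g gtr0_norm //.
Qed.
End B.
Section C.
Context {R : realType}.
Local Notation mu := (@lebesgue_measure R).

Lemma l2sq_cons k (x : R) (t : k.-tuple R) :
  l2sq (cons_tuple x t) = x ^+ 2 + l2sq t.
Proof.
rewrite /l2sq big_ord_recl; congr (_ + _).
by apply: eq_bigr => i _; rewrite tnthS.
Qed.

Lemma l1norm_cons k (x : R) (t : k.-tuple R) :
  l1norm (cons_tuple x t) = `|x| + l1norm t.
Proof.
rewrite /l1norm big_ord_recl; congr (_ + _).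
by apply: eq_bigr => i _; rewrite tnthS.
Qed.

Lemma lapd_cons k (eps x : R) (t : k.-tuple R) :
  laplace_density eps (cons_tuple x t) =
  (eps / 2 * expR (- (eps * `|x|))) * laplace_density eps t.
Proof.
rewrite /laplace_density l1norm_cons exprS mulrDr opprD expRD; ring.
Qed.

Lemma lap_n (eps : R) k : 0 < eps -> forall a b : R, 0 <= a -> 0 <= b ->
  lebesgue_int_n (fun t : k.-tuple R => ((a + b * l2sq t) * laplace_density eps t)%:E)
  = (a + b * (2 * k%:R / eps ^+ 2))%:E.
Proof.
move=> e0; elim: k => [|k IH] a b a0 b0.
  rewrite /= /l2sq /laplace_density /l1norm !big_ord0 expr0 !mulr0 oppr0 expR0.
  by rewrite mul0r !mulr0 !addr0 !mulr1.
rewrite /=.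
have c0 (x : R) : 0 <= eps / 2 * expR (- (eps * `|x|)).
  by apply: mulr_ge0; [apply: divr_ge0; [exact: ltW|] | exact: expR_ge0].
transitivity (\int[mu]_x (((a + b * (2 * k%:R / eps ^+ 2)) + b * x ^+ 2) *
    (eps / 2 * expR (- (eps * `|x|))))%:E)%E.
  apply: eq_integral => x _.
  have -> : ((a + b * (2 * k%:R / eps ^+ 2) + b * x ^+ 2) * (eps / 2 * expR (- (eps * `|x|))))%:E
    = ((a + b * x ^+ 2) * (eps / 2 * expR (- (eps * `|x|))) +
     b * (eps / 2 * expR (- (eps * `|x|))) * (2 * k%:R / eps ^+ 2))%:E.
    by congr EFin; ring.
  rewrite -(IH ((a + b * x ^+ 2) * (eps / 2 * expR (- (eps * `|x|))))
               (b * (eps / 2 * expR (- (eps * `|x|))))); last 2 first.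
  - apply: mulr_ge0 => //; apply: addr_ge0 => //; apply: mulr_ge0 => //; exact: sqr_ge0.
  - exact: mulr_ge0.
  congr (lebesgue_int_n _); apply/funext => t; congr EFin.
  rewrite l2sq_cons lapd_cons; ring.
rewrite lap_int //; last first.
  by apply: addr_ge0 => //; apply: mulr_ge0 => //; apply: divr_ge0; [rewrite mulr_ge0 // ler0n | exact: sqr_ge0].
congr EFin; rewrite -natr1; field; by rewrite gt_eqF.
Qed.
End C.
Section D.
Context {R : realType}.
Local Notation mu := (@lebesgue_measure R).

Lemma sqrt_cvgy : (@Num.sqrt R) x @[x --> +oo] --> +oo.
Proof.
apply/cvgryPge => A; near=> x.
have xA : A ^+ 2 <= x by near: x; apply: nbhs_pinfty_ge; rewrite num_real.
apply: le_trans (ler_wsqrtr xA); rewrite sqrtr_sqr; exact: ler_norm.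
Unshelve. all: by end_near. Qed.

Lemma sqrt_int (eps : R) : 0 < eps ->
  (\int[mu]_(r in `[0%R, +oo[) (expR (- (eps * Num.sqrt r)))%:E = (2 / eps ^+ 2)%:E)%E.
Proof.
move=> e0.
have en0 : eps != 0 by rewrite gt_eqF.
pose G := fun s : R => - (2 / eps) * ((s + 1 / eps) * expR (- (eps * s))).
have Gd (s : R) : is_derive s 1 G (2 * s * expR (- (eps * s))).
  by apply: is_derive_eq; rewrite /GRing.scale /= !mulr1; field.
have Gc : continuous G := @deriv_cont _ G _ Gd.
pose F := G \o Num.sqrt.
have Fc : continuous F.
  by move=> x; apply: continuous_comp; [exact: sqrt_continuous | exact: Gc].
have Fd (r : R) : 0 < r -> is_derive r 1 F (expR (- (eps * Num.sqrt r))).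
  move=> r0.
  have h := is_derive1_comp (Gd (Num.sqrt r)) (is_derive1_sqrt r0).
  apply: is_derive_eq.
  have s0 : Num.sqrt r != 0 by rewrite gt_eqF // sqrtr_gt0.
  by field.
have Flim : F x @[x --> +oo] --> 0.
  have GL : G x @[x --> +oo] --> 0.
  have -> : G = fun s => (- (2 / eps)) * (s ^+ 1 * expR (- (eps * s)))
      + (- (2 / eps ^+ 2)) * (s ^+ 0 * expR (- (eps * s))).
    by apply/funext => s; rewrite /G expr0 expr1; field.
  rewrite -[X in _ --> X](addr0 0).
  apply: cvgD.
  - rewrite -[X in _ --> X](mulr0 (- (2 / eps))); apply: cvgMl_tmp; exact: powexp_cvg.
  - rewrite -[X in _ --> X](mulr0 (- (2 / eps ^+ 2))); apply: cvgMl_tmp; exact: powexp_cvg.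
  exact: (cvg_comp _ _ sqrt_cvgy GL).
rewrite (@ge0_continuous_FTC2y _ _ F 0 0).
- congr EFin; rewrite /F /G /= sqrtr0 mulr0 oppr0 expR0 add0r mulr1; by field.
- by move=> x _; exact: expR_ge0.
- apply: continuous_subspaceT.
  have hd (s : R) : is_derive s 1 (fun s : R => expR (- (eps * s))) (- eps * expR (- (eps * s))).
    by apply: is_derive_eq; rewrite /GRing.scale /= !mulr1; ring.
  have hc := @deriv_cont _ _ _ hd.
  have -> : (fun x : R => expR (- (eps * Num.sqrt x))) = (fun s : R => expR (- (eps * s))) \o Num.sqrt by [].
  by move=> x; apply: continuous_comp; [exact: sqrt_continuous | exact: hc].
- exact: Flim.
- by move=> x x0; have [] := Fd x x0.
- exact: cvg_at_right_filter (Fc 0).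
- move=> x; rewrite in_itv /= andbT => x0.
  by have := Fd x x0 => Fdx; rewrite derive1E derive_val.
Qed.
End D.
Section E.
Context {R : realType}.

Lemma tail_bound d (T : measurableType d) (P : probability T R) (X : T -> R)
    (eps r : R) : 0 < eps -> measurable_fun setT X ->
  (forall (t : R) (S : set R), measurable S ->
     (P (X @^-1` [set x | S (x + t)%R]) <= (expR (eps * `|t|))%:E * P (X @^-1` S))%E) ->
  0 <= r ->
  ((expR (- (eps * Num.sqrt r)))%:E <= P [set w | (r < X w ^+ 2)%R])%E.
Proof.
move=> e0 mX H r0.
have mpre (B : set R) : measurable B -> measurable (X @^-1` B).
  by move=> mB; rewrite -[X @^-1` B]setTI; exact: mX.
have mQ : measurable [set w | r < X w ^+ 2].
  have -> : [set w | r < X w ^+ 2] = (fun w => X w ^+ 2) @^-1` `]r, +oo[.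
    by apply/seteqP; split => w /=; rewrite in_itv /= andbT.
  rewrite -[_ @^-1` _]setTI.
  exact: (measurable_realfun.measurable_funX 2 mX measurableT (measurable_itv `]r, +oo[)).
have fP (A : set T) : measurable A -> P A = (fine (P A))%:E.
  by move=> mA; rewrite fineK // fin_num_measure.
set q := fine (P [set w | r < X w ^+ 2]).
have key (s : R) : Num.sqrt r < s -> expR (- (eps * s)) <= q.
  move=> rs.
  have s0 : 0 < s by apply: le_lt_trans rs; exact: sqrtr_ge0.
  pose A0 := X @^-1` `[0%R, +oo[. pose B0 := X @^-1` `]-oo, 0%R[.
  pose A := X @^-1` `[s, +oo[. pose B := X @^-1` `]-oo, (- s)%R[.
  have mA0 : measurable A0 by apply: mpre; exact: measurable_itv.
  have mB0 : measurable B0 by apply: mpre; exact: measurable_itv.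
  have mA : measurable A by apply: mpre; exact: measurable_itv.
  have mB : measurable B by apply: mpre; exact: measurable_itv.
  have h1 : (P A0 <= (expR (eps * s))%:E * P A)%E.
    have := H s _ (measurable_itv `[s, +oo[).
    have -> : X @^-1` [set x | [set` `[s, +oo[] (x + s)] = A0.
      by apply/seteqP; split => w; rewrite /A0 /= !in_itv /= !andbT lerDr.
    by rewrite gtr0_norm.
  have h2 : (P B0 <= (expR (eps * s))%:E * P B)%E.
    have := H (- s) _ (measurable_itv `]-oo, (- s)%R[).
    have -> : X @^-1` [set x | [set` `]-oo, (- s)%R[] (x + - s)] = B0.
      by apply/seteqP; split => w; rewrite /B0 /= !in_itv /= ltrBlDr addNr.
    by rewrite normrN gtr0_norm.
  have hAB : (P A + P B <= P [set w | (r < X w ^+ 2)%R])%E.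
    rewrite -measureU //; last first.
      apply/seteqP; split => // w; rewrite /A /B /= !in_itv /= andbT => -[h h'].
      have : s < - s by apply: le_lt_trans h h'.
      by rewrite -subr_gt0 -opprD oppr_gt0 ltNge addr_ge0 // ltW.
    apply: le_measure; rewrite ?inE //; first exact: measurableU.
    have sq (y : R) : Num.sqrt r < `|y| -> r < y ^+ 2.
      move=> h; have y0 : 0 < y ^+ 2.
        by rewrite -real_normK ?num_real // exprn_gt0 // (le_lt_trans _ h) // sqrtr_ge0.
      by rewrite -ltr_sqrt // sqrtr_sqr.
    move=> w; rewrite /A /B /= !in_itv /= ?andbT => -[h|h]; apply: sq.
    - by apply: (lt_le_trans rs); apply: le_trans h _; exact: ler_norm.
    - apply: (lt_le_trans rs); rewrite -normrN; apply: le_trans (ler_norm _).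
      by rewrite lerNr ltW.
  have h01 : (P A0 + P B0 = 1)%E.
    rewrite -measureU //; last first.
      by apply/seteqP; split => // w; rewrite /A0 /B0 /= !in_itv /= andbT => -[h h']; move: (le_lt_trans h h'); rewrite ltxx.
    rewrite -(probability_setT P); congr (P _).
    apply/seteqP; split => // w _; rewrite /A0 /B0 /= !in_itv /= andbT.
    by case: (leP 0 (X w)) => h; [left | right].
  move: h1 h2 hAB h01.
  rewrite (fP _ mA0) (fP _ mA) (fP _ mB0) (fP _ mB) (fP _ mQ) -!EFinM -!EFinD !lee_fin.
  move=> h1 h2 hAB /(congr1 fine) /= h01.
  have E0 := expR_gt0 (eps * s).
  rewrite expRN -[X in X <= _]mulr1 ler_pdivrMl //.
  rewrite -h01; apply: le_trans (lerD h1 h2) _.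
  by rewrite -mulrDr ler_wpM2l // ltW.
rewrite (fP _ mQ) lee_fin -/q.
apply/ler_addgt0Pr => e ep.
set a := expR (- (eps * Num.sqrt r)).
have a0 : 0 < a := expR_gt0 _.
have dl0 : 0 < e / (a * eps) by rewrite divr_gt0 // mulr_gt0.
have := key (Num.sqrt r + e / (a * eps)).
rewrite ltrDl => /(_ dl0).
rewrite mulrDr opprD expRD -/a => h.
rewrite -lerBlDr; apply: le_trans h.
have := expR_ge1Dx (- (eps * (e / (a * eps)))).
move=> /(ler_wpM2l (ltW a0)).
apply: le_trans; rewrite le_eqVlt; apply/orP; left; apply/eqP.
by field; rewrite ?gt_eqF.
Qed.
End E.
Section F.
Context {R : realType}.
Local Notation mu := (@lebesgue_measure R).

Lemma key1 d (T : measurableType d) (P : probability T R) (X : T -> R)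
    (eps : R) : 0 < eps -> measurable_fun setT X ->
  (forall (t : R) (S : set R), measurable S ->
     (P (X @^-1` [set x | S (x + t)%R]) <= (expR (eps * `|t|))%:E * P (X @^-1` S))%E) ->
  ((2 / eps ^+ 2)%:E <= \int[P]_w ((X w) ^+ 2)%:E)%E.
Proof.
move=> e0 mX H.
have mY : (fun w => X w ^+ 2) \in mfun.
  by rewrite inE; exact: (measurable_realfun.measurable_funX 2 mX).
pose Y : {RV P >-> R} := mfun_Sub mY.
have -> : (\int[P]_w ((X w) ^+ 2)%:E)%E = ('E_P[Y])%E by rewrite expectation_def.
rewrite ge0_expectation_ccdf; last by move=> w; exact: sqr_ge0.
rewrite -(sqrt_int _ e0).
apply: ge0_le_integral => //.
- apply/measurable_EFinP; apply: measurable_funTS.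
  apply: continuous_measurable_fun.
  have hd (s : R) : is_derive s 1 (fun s : R => expR (- (eps * s))) (- eps * expR (- (eps * s))).
    by apply: is_derive_eq; rewrite /GRing.scale /= !mulr1; ring.
  have hc := @deriv_cont _ _ _ hd.
  have -> : (fun x : R => expR (- (eps * Num.sqrt x))) = (fun s : R => expR (- (eps * s))) \o Num.sqrt by [].
  by move=> x; apply: continuous_comp; [exact: sqrt_continuous | exact: hc].
- apply: measurable_funTS; exact: ccdf_measurable.
- move=> r; rewrite /= in_itv /= andbT => r0.
  rewrite /ccdf /distribution /pushforward.
  have -> : Y @^-1` `]r, +oo[ = [set w | (r < X w ^+ 2)%R].
    by apply/seteqP; split => w /=; rewrite in_itv /= andbT.
  exact: tail_bound.
Qed.
End F.
Lemma coord_private (R : realType) (eps : R) (n : nat)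
    (g : probability (n.-tuple R) R) (i : 'I_n) :
  additive_lipschitz_private eps g ->
  (forall (t : R) (S : set R), measurable S ->
     (g ((fun v : n.-tuple R => tnth v i) @^-1` [set x | S (x + t)%R]) <=
      (expR (eps * `|t|))%:E * g ((fun v : n.-tuple R => tnth v i) @^-1` S))%E).
Proof.
move=> Hp t S mS.
pose u : n.-tuple R := [tuple if j == i then t else 0 | j < n].
pose u' : n.-tuple R := [tuple (0 : R) | j < n].
have mS' : measurable ((fun v : n.-tuple R => tnth v i) @^-1` S).
  by rewrite -[_ @^-1` _]setTI; exact: (measurable_tnth i measurableT mS).
have := Hp u u' _ mS'.
have -> : tadd u @^-1` ((fun v : n.-tuple R => tnth v i) @^-1` S)
    = (fun v : n.-tuple R => tnth v i) @^-1` [set x | S (x + t)%R].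
  by apply/seteqP; split => v /=; rewrite /tadd /u !tnth_mktuple eqxx addrC.
have -> : tadd u' @^-1` ((fun v : n.-tuple R => tnth v i) @^-1` S)
    = (fun v : n.-tuple R => tnth v i) @^-1` S.
  by apply/seteqP; split => v /=; rewrite /tadd /u' !tnth_mktuple add0r.
have -> : l1norm (tsub u u') = `|t|.
  rewrite /l1norm (bigD1 i) //= big1 ?addr0.
    by rewrite /tsub /u /u' !tnth_mktuple eqxx subr0.
  by move=> j ji; rewrite /tsub /u /u' !tnth_mktuple (negbTE ji) subr0 normr0.
by [].
Qed.

Theorem theorem2 (R : realType) (eps : R) (n : nat)
    (heps : 0 < eps) (hn : (1 <= n)%N)
    (g : probability (n.-tuple R) R) :
  additive_lipschitz_private eps g ->
  ((2 * n%:R / eps ^+ 2)%:E <= \int[g]_v (l2sq v)%:E)%E /\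
  lebesgue_int_n (fun v : n.-tuple R => (l2sq v * laplace_density eps v)%:E)
    = (2 * n%:R / eps ^+ 2)%:E.
Proof.
move=> Hp; split; last first.
  have := @lap_n R eps n heps 0 1 (lexx 0) ler01.
  rewrite add0r mul1r => <-.
  by congr (lebesgue_int_n _); apply/funext => v; rewrite add0r mul1r.
have -> : (fun v : n.-tuple R => (l2sq v)%:E) =
    (fun v => \sum_(i < n) ((tnth v i) ^+ 2)%:E)%E.
  by apply/funext => v; rewrite /l2sq sumEFin.
rewrite ge0_integral_sum //; last first.
  - by move=> i v _; rewrite lee_fin sqr_ge0.
  - move=> i; apply/measurable_EFinP.
    exact: (measurable_funX 2 (measurable_tnth i)).
have -> : (2 * n%:R / eps ^+ 2)%:E = (\sum_(i < n) (2 / eps ^+ 2)%:E)%E.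
  rewrite sumEFin sumr_const card_ord; congr EFin.
  by rewrite -mulr_natr; ring.
apply: lee_sum => i _.
apply: key1 => //; first exact: measurable_tnth.
exact: coord_private.
Qed.
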